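(* Let $e_1,\dots,e_m$ be a chain of distinct edges, i.e. $e_j$ and $e_{j+1}$ are linked for each $j=1,\dots,m-1$, and let $1\le i\le m$. Fix $\lambda(e_i)$ and the values of $\lambda$ on all edges not in the chain. Then $$\int\prod_{j\ne i}\frac{d\lambda(e_j)}{\lambda(e_j)}\le(\ln4)^{m-1},$$ where the integral is over the set of $(\lambda(e_j))_{j\ne i}\in(0,\infty)^{m-1}$ for which the resulting point lies in $\Delta_L$.
   Context: $\Gamma$ is a finite trivalent graph with edge set $E$. A linking choice $L$ assigns to each vertex $v$ one of its three edges, the designated minimal edge at $v$. $\Delta_L$ is the set of $\lambda\in(0,\infty)^E$ such that, at every vertex $v$ with edges $e,f,g$: - the triangle inequalities $\lambda(e)\le\lambda(f)+\lambda(g)$, $\lambda(f)\le\lambda(e)+\lambda(g)$, $\lambda(g)\le\lambda(e)+\lambda(f)$ hold, and - the designated minimal edge has $\lambda$-value at most those of the other two. Two edges are linked if they meet at a vertex whose designated minimal edge is the third edge there. *)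

(* Defs.v *)
From HB Require Import structures.
From mathcomp Require Import all_boot all_order all_algebra.
From mathcomp Require Import all_classical all_reals all_analysis.
Set Implicit Arguments. Unset Strict Implicit. Unset Printing Implicit Defensive.
Import Order.TTheory GRing.Theory Num.Theory.
Local Open Scope classical_set_scope.
Local Open Scope ring_scope.

(* A finite trivalent graph: finite vertex type V, finite edge type E, and
   for each vertex v its three (half-)edge slots  ends v 0, ends v 1, ends v 2.
   Every edge has exactly two endpoint incidences (a loop at v occupies two
   slots of v). Multiple edges and loops are allowed. *)
Definition trivalent (V E : finType) (ends : V -> 'I_3 -> E) : Prop :=
  forall e : E, #|[set p : V * 'I_3 | ends p.1 p.2 == e]| = 2.

(* A linking choice designates at each vertex one of its three edge slots
   (L v), the designated minimal edge at v is  ends v (L v). *)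

Definition DeltaL (R : realType) (V E : finType) (ends : V -> 'I_3 -> E)
  (L : V -> 'I_3) : set (E -> R) :=
  [set lam | (forall e, 0 < lam e) /\
     (forall v : V,
        let a := lam (ends v 0) in let b := lam (ends v 1) in
        let c := lam (ends v 2) in
        [/\ a <= b + c, b <= a + c & c <= a + b]) /\
     (forall (v : V) (k : 'I_3), lam (ends v (L v)) <= lam (ends v k))].

Definition linked (V E : finType) (ends : V -> 'I_3 -> E) (L : V -> 'I_3)
  (e f : E) : Prop :=
  exists (v : V) (k1 k2 : 'I_3),
    [/\ k1 != k2, L v != k1, L v != k2, ends v k1 = e & ends v k2 = f].

Definition upd (R : Type) (E : eqType) (lam : E -> R) (e : E) (x : R) : E -> R :=
  fun e' => if e' == e then x else lam e'.

Fixpoint iint (R : realType) (E : eqType) (s : seq E)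
  (F : (E -> R) -> \bar R) (lam : E -> R) : \bar R :=
  match s with
  | [::] => F lam
  | e :: s' =>
      (\int[@lebesgue_measure R]_(x in (`]0%R, +oo[%classic : set R))
         iint s' F (upd lam e x))%E
  end.

(* Main.v *)
Require Import Defs.
From HB Require Import structures.
From mathcomp Require Import all_boot all_order all_algebra.
From mathcomp Require Import all_classical all_reals all_analysis.
From mathcomp Require Import ring lra.
From mathcomp Require Import measurable_realfun.
From mathcomp Require Import zify.
Import Order.TTheory GRing.Theory Num.Theory.
Import numFieldNormedType.Exports.
Local Open Scope classical_set_scope.
Local Open Scope ring_scope.

Local Open Scope ereal_scope.
Lemma ge0_le_integral_nm (R : realType) (D : set R) (f g : R -> \bar R) :
  (forall x, D x -> 0 <= f x) -> (forall x, D x -> f x <= g x) ->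
  \int[@lebesgue_measure R]_(x in D) f x <= \int[@lebesgue_measure R]_(x in D) g x.
Proof.
move=> f0 fg.
have g0 : forall x, D x -> 0 <= g x by move=> x Dx; exact: le_trans (f0 _ Dx) (fg _ Dx).
rewrite !ge0_integralE //.
apply: le_ereal_sup => _ [h hf <-]; exists h => // x.
apply: le_trans (hf x) _.
rewrite /patch; case: ifP => // /set_mem; exact: fg.
Qed.

Local Close Scope ereal_scope.
Lemma I3_cases (k : 'I_3) : k = 0 \/ k = 1 \/ k = 2.
Proof.
case: k => [[|[|[|n]]] Hk]; [left|right;left|right;right|]; try by apply: val_inj.
by [].
Qed.

Section K.
Variable R : realType.
Notation mu := (@lebesgue_measure R).

Definition kk (x y : R) : R :=
  if 0 < y then if y / 2 <= x then if x <= 2 * y then x^-1 else 0 else 0 else 0.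

Lemma kk_ge0 x y : 0 <= kk x y.
Proof.
rewrite /kk; case: ifP => // y0; case: ifP => // yx; case: ifP => // _.
rewrite invr_ge0; apply: le_trans yx; rewrite divr_ge0 // ltW //.
Qed.

Lemma int_kk_le y : (\int[mu]_x (kk x y)%:E <= (ln 4)%:E)%E.
Proof.
have l40 : 0 <= ln (4:R) by rewrite ln_ge0 // ler1n.
have [y0|y0] := leP y 0.
  rewrite integral0_eq ?lee_fin // => x _; rewrite /kk ltNge y0 //.
have ab : y / 2 < 2 * y.
  rewrite ltr_pdivrMr //; nra.
rewrite (_ : (fun x => (kk x y)%:E) = (fun x => (x^-1)%:E) \_ `[y/2, 2*y]); last first.
  apply/funext => x; rewrite /patch /kk y0.
  have -> : (x \in `[y / 2, 2 * y]%classic) = (y/2 <= x <= 2 * y).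
    by apply/idP/idP; rewrite inE /= in_itv /=.
  by case: (y/2 <= x) => //=; case: (x <= 2 * y).
rewrite -integral_mkcond.
rewrite (@continuous_FTC2 _ (fun x => x^-1) (@ln R) _ _ ab); last 3 first.
-   have H : {in `[y/2, 2*y]%classic, continuous (@GRing.inv R)}.
    move=> x; rewrite inE /= in_itv /= => /andP [hx _].
    apply: inv_continuous; apply: lt0r_neq0; apply: lt_le_trans hx; lra.
  exact: (continuous_in_subspaceT H).
- split.
  + move=> x; rewrite in_itv /= => /andP [hx _].
    apply: ex_derive; apply: is_derive1_ln; apply: lt_trans hx; lra.
  + apply: cvg_at_right_filter; apply: continuous_ln; lra.
  + apply: cvg_at_left_filter; apply: continuous_ln; lra.
- move=> x; rewrite in_itv /= => /andP [hx _].
  have x0 : 0 < x by apply: lt_trans hx; lra.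
  by rewrite derive1E; apply: derive_val; exact: is_derive1_ln.
rewrite -EFinB lee_fin.
rewrite -ln_div ?posrE; [|lra|lra].
rewrite (_ : 2 * y / (y / 2) = 4) //.
field; lra.
Qed.

Lemma minv : measurable_fun setT (fun x : R => x^-1).
Proof.
rewrite (_ : (fun x : R => x^-1) = (fun x => if x == 0 then 0 else x^-1)); last first.
  by apply/funext => x; case: eqP => // ->; rewrite invr0.
apply: measurable_fun_if => //.
  by apply: measurable_fun_eqr => //; exact: measurable_cst.
  try exact: measurable_cst.
rewrite setTI (_ : _ @^-1` _ = [set x : R | x != 0]); last first.
  by apply/seteqP; split => x /=; case: eqP.
apply: open_continuous_measurable_fun; first exact: open_neq.
move=> x; rewrite inE /= => x0; exact: inv_continuous.
Qed.

Lemma mkk d (T : measurableType d) (f g : T -> R) :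
  measurable_fun setT f -> measurable_fun setT g ->
  measurable_fun setT (fun t => kk (f t) (g t)).
Proof.
move=> mf mg; rewrite /kk.
apply: measurable_fun_ifT.
- by apply: measurable_fun_ltr => //; exact: measurable_cst.
- apply: measurable_fun_ifT.
  + apply: measurable_fun_ler => //.
    by apply: measurable_funM => //; exact: measurable_cst.
  + apply: measurable_fun_ifT; last exact: measurable_cst.
    * apply: measurable_fun_ler => //.
      by apply: measurable_funM => //; exact: measurable_cst.
    * exact: measurableT_comp minv mf.
  + exact: measurable_cst.
- exact: measurable_cst.
Qed.

Fixpoint U (c : R) (n : nat) (x : R) : \bar R :=
  match n with
  | 0 => (kk x c)%:E
  | n'.+1 => (\int[mu]_y ((kk x y)%:E * U c n' y))%E
  end.

Lemma U_ge0 c n x : (0 <= U c n x)%E.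
Proof.
elim: n x => [|n IH] x /=; first by rewrite lee_fin kk_ge0.
by apply: integral_ge0 => y _; apply: mule_ge0; rewrite ?lee_fin ?kk_ge0.
Qed.

Lemma U_meas c n : measurable_fun setT (fun x : R => U c n x).
Proof.
elim: n => [|n IH] /=.
  apply/measurable_EFinP; apply: mkk => //; exact: measurable_cst.
pose F := fun z : R * R => ((kk z.1 z.2)%:E * U c n z.2)%E.
have mF : measurable_fun setT F.
  apply: emeasurable_funM.
    by apply/measurable_EFinP; apply: mkk.
  exact: measurableT_comp IH measurable_snd.
have F0 : forall z, (0 <= F z)%E.
  by move=> z; apply: mule_ge0; rewrite ?lee_fin ?kk_ge0 ?U_ge0.
exact: (@measurable_fun_fubini_tonelli_F _ _ _ _ _ mu F mF F0).
Qed.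

Lemma int_U c n : (\int[mu]_x U c n x <= ((ln (4:R)) ^+ n.+1)%:E)%E.
Proof.
have l40 : 0 <= ln (4:R) by rewrite ln_ge0 // ler1n.
elim: n => [|n IH] /=; first by rewrite expr1; exact: int_kk_le.
pose F := fun z : R * R => ((kk z.1 z.2)%:E * U c n z.2)%E.
have mF : measurable_fun setT F.
  apply: emeasurable_funM.
    by apply/measurable_EFinP; apply: mkk.
  exact: measurableT_comp (U_meas c n) measurable_snd.
have F0 : forall z, (0 <= F z)%E.
  by move=> z; apply: mule_ge0; rewrite ?lee_fin ?kk_ge0 ?U_ge0.
have H := @fubini_tonelli _ _ _ _ _ mu mu F mF F0.
have E : (\int[mu]_x U c n.+1 x = \int[mu]_y \int[mu]_x F (x, y))%E.
  rewrite -H; apply: eq_integral => x _ /=.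
  done.
rewrite E.
apply: (@le_trans _ _ (\int[mu]_y ((ln (4:R))%:E * U c n y))%E).
  apply: ge0_le_integral_nm => y _.
    by apply: integral_ge0 => x _; exact: F0.
  rewrite /F /=.
  rewrite (@ge0_integralZr _ _ _ mu setT measurableT (fun x => (kk x y)%:E)); first last.
  - exact: U_ge0.
  - by move=> x _; rewrite lee_fin kk_ge0.
  - apply/measurable_EFinP; apply: mkk; [exact: measurable_id|exact: measurable_cst].
  apply: lee_wpmul2r; first exact: U_ge0.
  exact: int_kk_le.
rewrite (@ge0_integralZl_EFin _ _ _ mu setT measurableT (U c n)); first last.
  - by rewrite l40.
  - exact: U_meas.
  - by move=> y _; exact: U_ge0.
rewrite exprS EFinM; apply: lee_wpmul2l; first by rewrite lee_fin.
exact: IH.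
Qed.

Section Iint.
Context {E : eqType}.
Implicit Types (s : seq E) (F : (E -> R) -> \bar R) (lam l : E -> R).

Definition agree s l lam := forall e, e \notin s -> l e = lam e.

Lemma agree_upd e s l lam x : agree s l (upd lam e x) -> agree (e :: s) l lam.
Proof.
move=> H e0; rewrite in_cons negb_or => /andP [ne ns].
by rewrite H // /upd (negbTE ne).
Qed.
Arguments agree_upd {e s l lam x}.

Lemma iint_eq s F1 F2 lam : (forall l, agree s l lam -> F1 l = F2 l) ->
  iint s F1 lam = iint s F2 lam.
Proof.
elim: s lam => [|e s IH] lam H /=; first by apply: H.
apply: eq_integral => x _; apply: IH => l Hl; apply: H.
exact: agree_upd Hl.
Qed.

Lemma iint_ge0 s F lam : (forall l, agree s l lam -> (0 <= F l)%E) -> (0 <= iint s F lam)%E.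
Proof.
elim: s lam => [|e s IH] lam H /=; first by apply: H => e.
apply: integral_ge0 => x _; apply: IH => l Hl; apply: H.
exact: agree_upd Hl.
Qed.

Lemma iint_le s F1 F2 lam :
  (forall l, agree s l lam -> (0 <= F1 l)%E /\ (F1 l <= F2 l)%E) ->
  (iint s F1 lam <= iint s F2 lam)%E.
Proof.
elim: s lam => [|e s IH] lam H /=; first by case: (H lam (fun _ _ => erefl)).
apply: ge0_le_integral_nm => x _.
  by apply: iint_ge0 => l Hl; case: (H l (agree_upd Hl)).
by apply: IH => l Hl; apply: H; exact: agree_upd Hl.
Qed.

Lemma iint_cat s1 s2 F lam : iint (s1 ++ s2) F lam = iint s1 (iint s2 F) lam.
Proof.
elim: s1 lam => [|e s1 IH] lam //=.
by apply: eq_integral => x _; rewrite IH.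
Qed.

Lemma upd_eq lam e x : upd lam e x e = x.
Proof. by rewrite /upd eqxx. Qed.

Lemma upd_neq lam e x e' : e' != e -> upd lam e x e' = lam e'.
Proof. by rewrite /upd => /negbTE ->. Qed.

Fixpoint PB s (p : E) l : R :=
  match s with [::] => 1 | e :: s' => kk (l e) (l p) * PB s' e l end.

Fixpoint PA s (z : E) l : R :=
  match s with [::] => 1 | e :: s' => kk (l e) (l (head z s')) * PA s' z l end.

Lemma PB_ge0 s p l : 0 <= PB s p l.
Proof. by elim: s p => [|e s IH] p //=; rewrite mulr_ge0 ?kk_ge0. Qed.

Lemma PA_ge0 s z l : 0 <= PA s z l.
Proof. by elim: s => [|e s IH] //=; rewrite mulr_ge0 ?kk_ge0. Qed.

Lemma PA_upd s z l e x : e \notin z :: s -> PA s z (upd l e x) = PA s z l.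
Proof.
elim: s => [|e1 s IH] //=; rewrite !in_cons !negb_or => /and3P [ez ee1 es].
rewrite IH; last by rewrite in_cons negb_or ez.
rewrite (@upd_neq l e x e1); last by rewrite eq_sym.
case: s {IH} es => [|e2 s] /=; first by rewrite upd_neq // eq_sym.
by rewrite in_cons negb_or => /andP [? _]; rewrite upd_neq // eq_sym.
Qed.

Notation D := (`]0%R, +oo[%classic : set R).

Lemma int_D_le_T (f : R -> \bar R) : (forall x, (0 <= f x)%E) ->
  (\int[mu]_(x in D) f x <= \int[mu]_x f x)%E.
Proof.
move=> f0; rewrite integral_mkcond; apply: ge0_le_integral_nm => x _.
  by rewrite /patch; case: ifP.
by rewrite /patch; case: ifP.
Qed.

Lemma int_D_le (f : R -> \bar R) y : (forall x, (0 <= f x)%E) ->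
  (\int[mu]_x f x <= y)%E -> (\int[mu]_(x in D) f x <= y)%E.
Proof. by move=> f0; apply: le_trans (int_D_le_T f f0). Qed.

Lemma kint_le y K : 0 <= K -> (\int[mu]_(x in D) (K * kk x y)%:E <= (K * ln 4)%:E)%E.
Proof.
move=> K0; apply: int_D_le.
  by move=> x; rewrite lee_fin mulr_ge0 ?kk_ge0.
under eq_integral do rewrite EFinM.
rewrite (@ge0_integralZl_EFin _ _ _ mu setT measurableT (fun x => (kk x y)%:E)); first last.
- exact: K0.
- apply/measurable_EFinP; apply: mkk; [exact: measurable_id|exact: measurable_cst].
- by move=> x _; rewrite lee_fin kk_ge0.
rewrite EFinM; apply: lee_wpmul2l; first by rewrite lee_fin.
exact: int_kk_le.
Qed.

Lemma iint_B s p C lam : uniq (p :: s) -> (forall l, 0 <= C l) ->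
  (forall l e x, e \in s -> C (upd l e x) = C l) ->
  (iint s (fun l => (C l * PB s p l)%:E) lam <= (C lam * ln 4 ^+ size s)%:E)%E.
Proof.
elim: s p C lam => [|e s IH] p C lam Hu C0 Cinv /=.
  by rewrite lee_fin /= ?mulr1 ?expr0 ?mulr1.
move: Hu; rewrite /= !in_cons negb_or => /andP [/andP [pe ps] /andP [es us]].
set C' := fun l => C l * kk (l e) (l p).
set K := C lam * ln 4 ^+ size s.
have K0 : 0 <= K by rewrite mulr_ge0 // exprn_ge0 // ln_ge0 // ler1n.
apply: (@le_trans _ _ (\int[mu]_(x in D) (K * kk x (lam p))%:E)%E).
  apply: ge0_le_integral_nm => x _.
    apply: iint_ge0 => l _; rewrite lee_fin mulr_ge0 // mulr_ge0 ?kk_ge0 ?PB_ge0 //.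
  have -> : iint s (fun l => (C l * (kk (l e) (l p) * PB s e l))%:E) (upd lam e x) =
            iint s (fun l => (C' l * PB s e l)%:E) (upd lam e x).
    by apply: iint_eq => l _; rewrite /C' mulrA.
  apply: le_trans (IH e C' (upd lam e x) _ _ _) _.
  - by rewrite /= es.
  - by move=> l; rewrite /C' mulr_ge0 ?kk_ge0.
  - move=> l e' x' He'; rewrite /C' Cinv ?in_cons ?He' ?orbT //.
    have e'e : e != e' by apply: contraNneq es => ->.
    have e'p : p != e' by apply: contraNneq ps => ->.
    by rewrite !upd_neq.
  rewrite /C' Cinv ?mem_head // upd_eq upd_neq // lee_fin /K.
  by rewrite mulrAC.
apply: le_trans (@kint_le (lam p) K K0) _.
rewrite lee_fin /K exprS.
by rewrite -mulrA [ln 4 ^+ size s * _]mulrC.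
Qed.

Lemma iint_cons e s F lam : iint (e :: s) F lam = (\int[mu]_(x in D) iint s F (upd lam e x))%E.
Proof. by []. Qed.

Lemma iint_A s e z g lam : uniq (z :: e :: s) -> (forall x, 0 <= g x) ->
  (iint (e :: s) (fun l => (g (l e) * PA (e :: s) z l)%:E) lam <=
   \int[mu]_(x in D) ((g x)%:E * U (lam z) (size s) x))%E.
Proof.
elim: s e g lam => [|e2 s IH] e g lam Hu g0.
  rewrite /=; apply: ge0_le_integral_nm => x _.
    by rewrite lee_fin mulr_ge0 ?mulr_ge0 ?kk_ge0.
  move: Hu; rewrite /= !in_cons orbF => /andP [ze _].
  by rewrite upd_eq upd_neq // mulr1 EFinM.
rewrite /= !in_cons !negb_or in Hu; case/andP: Hu => [/and3P [ze ze2 zs] /andP [/andP [ee2 es] Hu2]].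
rewrite iint_cons; apply: ge0_le_integral_nm => x _.
  apply: iint_ge0 => l _; rewrite lee_fin mulr_ge0 ?mulr_ge0 ?kk_ge0 ?PA_ge0 //.
pose gx := fun y => g x * kk x y.
have -> : iint (e2 :: s) (fun l => (g (l e) * PA (e :: e2 :: s) z l)%:E) (upd lam e x) =
          iint (e2 :: s) (fun l => (gx (l e2) * PA (e2 :: s) z l)%:E) (upd lam e x).
  apply: iint_eq => l Hl.
  have lex : l e = x by rewrite Hl ?upd_eq // in_cons negb_or ee2.
  by rewrite /gx /= lex !mulrA.
apply: le_trans (IH e2 gx (upd lam e x) _ _) _.
- by rewrite /= in_cons negb_or ze2 zs.
- by move=> y; rewrite /gx mulr_ge0 ?kk_ge0.
rewrite upd_neq //.
apply: int_D_le.
  by move=> y; rewrite mule_ge0 ?U_ge0 // lee_fin /gx mulr_ge0 ?kk_ge0.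
under eq_integral do rewrite /gx EFinM -muleA.
rewrite (@ge0_integralZl_EFin _ _ _ mu setT measurableT (fun y => (kk x y)%:E * U (lam z) (size s) y)%E); first last.
- exact: g0.
- apply: emeasurable_funM; last exact: U_meas.
  apply/measurable_EFinP; apply: mkk; [exact: measurable_cst|exact: measurable_id].
- by move=> y _; rewrite mule_ge0 ?U_ge0 // lee_fin kk_ge0.
by [].
Qed.

Lemma iint_A1 s e z K lam : uniq (z :: e :: s) -> 0 <= K ->
  (iint (e :: s) (fun l => (K * PA (e :: s) z l)%:E) lam <= (K * ln 4 ^+ (size s).+1)%:E)%E.
Proof.
move=> Hu K0.
apply: le_trans (@iint_A s e z (fun _ => K) lam Hu (fun _ => K0)) _.
apply: int_D_le.
  by move=> y; rewrite mule_ge0 ?U_ge0 // lee_fin.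
rewrite (@ge0_integralZl_EFin _ _ _ mu setT measurableT (U (lam z) (size s))); first last.
- exact: K0.
- exact: U_meas.
- by move=> y _; exact: U_ge0.
rewrite EFinM; apply: lee_wpmul2l; first by rewrite lee_fin.
exact: int_U.
Qed.

End Iint.

Section Graph.
Variables (V E : finType) (ends : V -> 'I_3 -> E) (L : V -> 'I_3).

Lemma tri3 (a : 'I_3 -> R) : a 0 <= a 1 + a 2 -> a 1 <= a 0 + a 2 -> a 2 <= a 0 + a 1 ->
  forall k1 k2 k3, k1 != k2 -> k3 != k1 -> k3 != k2 -> a k1 <= a k2 + a k3.
Proof.
move=> h0 h1 h2 k1 k2 k3.
by case: (I3_cases k1) => [->|[->|->]]; case: (I3_cases k2) => [->|[->|->]];
  case: (I3_cases k3) => [->|[->|->]] => // _ _ _; lra.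
Qed.

Lemma Delta_pos (l : E -> R) e : DeltaL ends L l -> 0 < l e.
Proof. by case. Qed.

Lemma linked_bound (l : E -> R) e f : DeltaL ends L l -> linked ends L e f ->
  l e <= 2 * l f /\ l f <= 2 * l e.
Proof.
move=> [pos [tri mn]] [v [k1 [k2 [nk Lk1 Lk2 He Hf]]]].
pose a k := l (ends v k).
have [t0 t1 t2] := tri v.
have T := @tri3 a t0 t1 t2.
have m1 := mn v k1; have m2 := mn v k2.
have A1 := T k1 k2 (L v) nk Lk1 Lk2.
have nk2 : k2 != k1 by rewrite eq_sym.
have A2 := T k2 k1 (L v) nk2 Lk2 Lk1.
rewrite /a He Hf in A1 A2 m1 m2.
split; lra.
Qed.
Arguments linked_bound {l e f}.

Lemma kk_eq a b : 0 < b -> a <= 2 * b -> b <= 2 * a -> kk a b = a^-1.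
Proof.
move=> b0 h1 h2; rewrite /kk b0.
have -> : b / 2 <= a by rewrite ler_pdivrMr //; lra.
by rewrite h1.
Qed.

Fixpoint chA (s : seq E) (z : E) : Prop :=
  match s with [::] => True | e :: s' => linked ends L e (head z s') /\ chA s' z end.
Fixpoint chB (p : E) (s : seq E) : Prop :=
  match s with [::] => True | e :: s' => linked ends L p e /\ chB e s' end.

Lemma PA_eq s z (l : E -> R) : DeltaL ends L l -> chA s z -> PA s z l = \prod_(e <- s) (l e)^-1.
Proof.
move=> Hl; elim: s => [|e s IH] /=; first by rewrite big_nil.
move=> [hl hc]; rewrite big_cons IH //.
have [b1 b2] := linked_bound Hl hl.
by rewrite kk_eq // Delta_pos.
Qed.

Lemma PB_eq s p (l : E -> R) : DeltaL ends L l -> chB p s -> PB s p l = \prod_(e <- s) (l e)^-1.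
Proof.
move=> Hl; elim: s p => [|e s IH] p /=; first by rewrite big_nil.
move=> [hl hc]; rewrite big_cons IH //.
have [b1 b2] := linked_bound Hl hl.
by rewrite kk_eq // Delta_pos.
Qed.


Lemma chA_iota (f : nat -> E) a n :
  (forall t, (a <= t)%N -> (t < a + n)%N -> linked ends L (f t) (f t.+1)) ->
  chA (map f (iota a n)) (f (a + n)%N).
Proof.
elim: n a => [|n IH] a H //=; split.
- have -> : head (f (a + n.+1)%N) (map f (iota a.+1 n)) = f a.+1.
    by case: n {IH H} => [|n] //=; rewrite addn1.
  by apply: H => //; lia.
- rewrite (_ : (a + n.+1 = a.+1 + n)%N); last by lia.
  by apply: IH => t h1 h2; apply: H; lia.
Qed.

Lemma chB_iota (f : nat -> E) a n :
  (forall t, (a <= t)%N -> (t < a + n)%N -> linked ends L (f t) (f t.+1)) ->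
  chB (f a) (map f (iota a.+1 n)).
Proof.
elim: n a => [|n IH] a H //=; split.
- by apply: H; lia.
- by apply: IH => t h1 h2; apply: H; lia.
Qed.

End Graph.
End K.
Arguments PA {R E}. Arguments PB {R E}. Arguments chA {V E}. Arguments chB {V E}.
Arguments iint_le {R E}. Arguments iint_ge0 {R E}. Arguments iint_cat {R E}.
Arguments iint_eq {R E}. Arguments iint_B {R E}. Arguments iint_A1 {R E}.
Arguments PA_ge0 {R E}. Arguments PB_ge0 {R E}. Arguments PA_upd {R E}.
Arguments PA_eq {R V E ends L s z l}. Arguments PB_eq {R V E ends L s p l}.

Theorem mainTheorem8 (R : realType) (V E : finType) (ends : V -> 'I_3 -> E)
  (Htri : trivalent ends) (L : V -> 'I_3)
  (m : nat) (c : 'I_m -> E) (Hinj : injective c)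
  (Hchain : forall (j : 'I_m) (Hj : (j.+1 < m)%N), linked ends L (c j) (c (Ordinal Hj)))
  (i : 'I_m) (lam0 : E -> R) :
  (iint [seq c j | j <- enum 'I_m & j != i]
     (fun lam : E -> R =>
        ((\1_(DeltaL ends L) lam : R) *
         \prod_(j <- enum 'I_m | j != i) (lam (c j))^-1)%:E)
     lam0
   <= ((ln (4 : R)) ^+ m.-1)%:E)%E.
Proof.
move: c Hinj Hchain i; case: m => [|m] c Hinj Hchain i; first by case: i.
pose c' := fun t : nat => c (inord t).
have cc' : forall j : 'I_m.+1, c j = c' j by move=> j; rewrite /c' inord_val.
have link : forall t, (t.+1 < m.+1)%N -> linked ends L (c' t) (c' t.+1).
  move=> t Ht.
  have Ht' : (t < m.+1)%N by lia.
  have Hj : (((inord t : 'I_m.+1) : nat).+1 < m.+1)%N by rewrite inordK.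
  have := Hchain (inord t) Hj.
  rewrite (_ : Ordinal Hj = inord t.+1) //.
  by apply: val_inj; rewrite /= !inordK.
have hi := ltn_ord i.
have hsplit : iota 0 m.+1 = iota 0 i ++ (i : nat) :: iota i.+1 (m.+1 - i.+1)%N.
  have Hm : m.+1 = (i + (m.+1 - i.+1)%N.+1)%N by lia.
  by rewrite {1}Hm iotaD add0n.
set A := map c' (iota 0 i).
set B := map c' (iota i.+1 (m.+1 - i.+1)%N).
set z := c' i.
have hS : [seq c j | j <- enum 'I_m.+1 & j != i] = A ++ B.
  have -> : [seq c j | j <- enum 'I_m.+1 & j != i] = map c' (map val [seq j <- enum 'I_m.+1 | j != i]).
    by rewrite -map_comp; apply: eq_map => j; rewrite /= cc'.
  have -> : map val [seq j <- enum 'I_m.+1 | j != i] = [seq n <- iota 0 m.+1 | n != (i : nat)].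
    by rewrite -val_enum_ord [RHS]filter_map.
  rewrite hsplit filter_cat /= eqxx /= map_cat.
  congr cat.
    congr map; rewrite (@eq_in_filter _ _ predT) ?filter_predT // => n.
    by rewrite mem_iota add0n => /andP [_ h]; rewrite /= neq_ltn h.
  congr map; rewrite (@eq_in_filter _ _ predT) ?filter_predT // => n.
  by rewrite mem_iota => /andP [h _]; rewrite /= neq_ltn h orbT.
have hU : uniq (A ++ z :: B).
  have : uniq (map c' (iota 0 m.+1)).
    rewrite map_inj_in_uniq ?iota_uniq // => a b; rewrite !mem_iota /= => Ha Hb.
    move=> /Hinj /(congr1 val); rewrite /= !inordK //; lia.
  by rewrite hsplit map_cat.
have uzA : uniq (z :: A).
  move: hU; rewrite cat_uniq /= => /and3P [uA /norP [zA _] _].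
  by rewrite /= uA andbT.
have uzB : uniq (z :: B).
  by move: hU; rewrite cat_uniq /= => /and3P [_ _ /andP [-> ->]].
have BA : forall e, e \in B -> e \notin z :: A.
  move=> e eB; move: hU; rewrite cat_uniq /= => /and3P [_ /norP [zA hB] /andP [zB _]].
  rewrite in_cons negb_or; apply/andP; split.
    by apply: contraNneq zB => <-.
  by apply: contra hB => eA; apply/hasP; exists e.
have chAz : chA ends L A z.
  have := @chA_iota V E ends L c' 0 i.
  rewrite add0n; apply => t _ h; apply: link; lia.
have chBz : chB ends L z B.
  apply: (@chB_iota V E ends L c' i (m.+1 - i.+1)%N) => t h1 h2; apply: link; lia.
have szA : size A = i by rewrite size_map size_iota.
have szB : size B = (m.+1 - i.+1)%N by rewrite size_map size_iota.
rewrite hS.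
apply: (@le_trans _ _ (iint (A ++ B) (fun l => (PA A z l * PB B z l)%:E) lam0)).
  apply: iint_le => l _.
  have hP : \prod_(j <- enum 'I_m.+1 | j != i) (l (c j))^-1 = \prod_(e <- A ++ B) (l e)^-1.
    by rewrite -hS big_map big_filter.
  rewrite hP indicE; case: (boolP (l \in DeltaL ends L)) => Hin.
    have Hl := set_mem Hin.
    rewrite mul1r big_cat /= -(PA_eq Hl chAz) -(PB_eq Hl chBz).
    by split => //; rewrite lee_fin mulr_ge0 ?PA_ge0 ?PB_ge0.
  by rewrite mul0r; split => //; rewrite lee_fin mulr_ge0 ?PA_ge0 ?PB_ge0.
rewrite iint_cat.
apply: (@le_trans _ _ (iint A (fun l => (PA A z l * ln 4 ^+ size B)%:E) lam0)).
  apply: iint_le => l _; split.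
    by apply: iint_ge0 => l' _; rewrite lee_fin mulr_ge0 ?PA_ge0 ?PB_ge0.
  apply: iint_B => //; first by move=> l'; exact: PA_ge0.
  by move=> l' e x He; apply: PA_upd; exact: BA.
have K0 : 0 <= ln (4:R) ^+ size B by rewrite exprn_ge0 // ln_ge0 // ler1n.
clearbody A; case: A uzA szA {hS hU BA chAz} => [|e s] uzA szA.
  rewrite /= mul1r lee_fin szB -szA /=.
  by rewrite subn1.
rewrite (@iint_eq R E (e :: s) _ (fun l => (ln 4 ^+ size B * PA (e :: s) z l)%:E) lam0); last first.
  by move=> l _; rewrite mulrC.
apply: le_trans (@iint_A1 R E s e z (ln 4 ^+ size B) lam0 uzA K0) _.
rewrite lee_fin -exprD szB; rewrite /= in szA.
have -> : ((m.+1 - i.+1) + (size s).+1 = m.+1.-1)%N by rewrite /=; lia.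
by [].
Qed.
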